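(* Let $L/K$ be a Galois extension of number fields with Galois group $G=\{\sigma_{g_1},\dots,\sigma_{g_n}\}$ and $R\subseteq S$ the rings of integers. For $1\le l\le n$ let $I_{g_l}=\{\sigma_{g_l},\dots,\sigma_{g_n}\}$, $P_l=(S\otimes_RS)/(S\otimes_RS)_{I_{g_l}^c}$, and $P=P_1\oplus\cdots\oplus P_n$. Let $\mathcal{R}$ be the set of $n\times n$ matrices over $S\otimes_RS$ whose $(i,j)$ entry lies in $(S\otimes_RS)_{I_{g_i}\cup I_{g_j}^c}$, and $\mathcal{I}$ the set of $n\times n$ matrices whose $(i,j)$ entry lies in $(S\otimes_RS)_{I_{g_j}^c}$. Then $\mathcal{R}$ is a subring of $M_n(S\otimes_RS)$, $\mathcal{I}$ is a two-sided ideal of $\mathcal{R}$, and there is an isomorphism of $S\otimes_RS$-algebras $$\operatorname{End}_{S\otimes_RS}(P)^{op}\cong\mathcal{R}/\mathcal{I}.$$ Furthermore the natural map $S\otimes_RS\to\operatorname{Cen}(\operatorname{End}_{S\otimes_RS}(P))$, $x\mapsto(p\mapsto xp)$, is an isomorphism, so $S\otimes_RS\cong\operatorname{Cen}(\operatorname{End}_{S\otimes_RS}(P)^{op})$.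
   Context: $\phi_{g_k}:L\otimes_KL\to L$ is $l_1\otimes l_2\mapsto\sigma_{g_k}(l_1)l_2$, with $S\otimes_RS$ regarded as a subring of $L\otimes_KL$. For $I\subseteq G$, $(S\otimes_RS)_I=\{x\in S\otimes_RS:\phi_{g_k}(x)=0$ for all $k$ with $\sigma_{g_k}\notin I\}$; $I^c=G\setminus I$. $\operatorname{Cen}$ denotes the center. *)

(* Defs.v *)
From HB Require Import structures.
From mathcomp Require Import all_boot all_order all_algebra all_fingroup all_field.
Set Implicit Arguments. Unset Strict Implicit. Unset Printing Implicit Defensive.
Import GRing.Theory.
Local Open Scope ring_scope.

Definition is_algint (F : fieldType) (x : F) : Prop :=
  exists p : {poly int}, p \is monic /\ root (map_poly (fun z : int => z%:~R) p) x.

Definition in_ringOfIntegers (M : fieldExtType rat) (E : {subfield M}) (x : M) : Prop :=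
  x \in E /\ is_algint x.

Section TensorModel.
Variables (M : splittingFieldType rat) (K L : {subfield M}) (n : nat)
          (g : 'I_n -> gal_of L).

(* Coordinates of L (x)_K L under  l1 (x) l2 |-> (phi_{g_k}(l1 (x) l2))_k
   = (sigma_{g_k}(l1) l2)_k, i.e. the product of the maps phi_{g_k}. *)
Definition TV := {ffun 'I_n -> M}.
Definition tens (a b : M) : TV := [ffun k => (g k : 'AEnd(M)) a * b].

(* S (x)_R S, regarded inside L (x)_K L (= its image under (phi_{g_k})_k) *)
Definition inSS (x : TV) : Prop :=
  exists s : seq (M * M),
    (forall p, p \in s -> in_ringOfIntegers L p.1 /\ in_ringOfIntegers L p.2) /\
    x = \sum_(p <- s) tens p.1 p.2.

Definition inSS_I (I : {set gal_of L}) (x : TV) : Prop :=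
  inSS x /\ forall k : 'I_n, g k \notin I -> x k = 0.

Definition Ig (l : 'I_n) : {set gal_of L} := g @: [set k : 'I_n | (l <= k)%N].
Definition Gc (I : {set gal_of L}) : {set gal_of L} := ('Gal(L / K) :\: I)%g.

(* P = P_1 (+) ... (+) P_n, P_l = (S(x)S)/(S(x)S)_{I_{g_l}^c};
   elements represented by tuples of representatives. *)
Definition PV := {ffun 'I_n -> TV}.
Definition Prep (p : PV) : Prop := forall l, inSS (p l).
Definition Peq (p q : PV) : Prop := forall l, inSS_I (Gc (Ig l)) (p l - q l).
Definition smul (x : TV) (p : PV) : PV := [ffun l => x * p l].

Definition isEnd (f : PV -> PV) : Prop :=
  [/\ forall p, Prep p -> Prep (f p),
      forall p q, Prep p -> Prep q -> Peq p q -> Peq (f p) (f q),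
      forall p q, Prep p -> Prep q -> Peq (f (p + q)) (f p + f q)
    & forall x p, inSS x -> Prep p -> Peq (f (smul x p)) (smul x (f p))].
Definition EndEq (f f' : PV -> PV) : Prop := forall p, Prep p -> Peq (f p) (f' p).

Definition inRmat (A : 'M[TV]_n) : Prop :=
  forall i j, inSS_I (Ig i :|: Gc (Ig j)) (A i j).
Definition inImat (A : 'M[TV]_n) : Prop :=
  forall i j, inSS_I (Gc (Ig j)) (A i j).

End TensorModel.

(* Main.v *)
Require Import Defs.
From HB Require Import structures.
From mathcomp Require Import all_boot all_order all_algebra all_fingroup all_field.
From Stdlib Require Import Classical.
Import GRing.Theory Num.Theory.
Local Open Scope ring_scope.

Lemma algintE (F : fieldType) (x : F) :
  is_algint x <-> integralOver (intr : {rmorphism int -> F}) x.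
Proof. split; case=> p; [case=> *|move=> *]; by exists p. Qed.

Lemma algint_add (F : fieldType) (x y : F) : is_algint x -> is_algint y -> is_algint (x + y).
Proof. move=> /algintE hx /algintE hy; apply/algintE; exact: integral_add. Qed.
Lemma algint_mul (F : fieldType) (x y : F) : is_algint x -> is_algint y -> is_algint (x * y).
Proof. move=> /algintE hx /algintE hy; apply/algintE; exact: integral_mul. Qed.
Lemma algint_opp (F : fieldType) (x : F) : is_algint x -> is_algint (- x).
Proof. move=> /algintE hx; apply/algintE; exact: integral_opp. Qed.
Lemma algint1 (F : fieldType) : is_algint (1 : F).
Proof. apply/algintE; rewrite -(rmorph1 (intr : {rmorphism int -> F})); exact: integral_id. Qed.
Lemma algint0 (F : fieldType) : is_algint (0 : F).
Proof. apply/algintE; rewrite -(rmorph0 (intr : {rmorphism int -> F})); exact: integral_id. Qed.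
Lemma algint_rmorph (F E : fieldType) (f : {rmorphism F -> E}) (x : F) :
  is_algint x -> is_algint (f x).
Proof.
case=> p [mp rp]; exists p; split => //.
have -> : map_poly (fun z : int => z%:~R : E) p = map_poly f (map_poly (fun z : int => z%:~R : F) p).
  by rewrite -map_poly_comp; apply: eq_map_poly => z /=; rewrite rmorph_int.
by rewrite rmorph_root.
Qed.

Lemma clear_den (M : fieldExtType rat) (q : {poly rat}) (a : M) :
  q \is monic -> root (map_poly (in_alg M) q) a ->
  exists d : rat, d != 0 /\ is_algint (d *: a).
Proof.
move=> mq rq.
set N := size q. set m := N.-1.
have N0 : (0 < N)%N by rewrite lt0n size_poly_eq0 monic_neq0.
have cm : q`_m = 1 by move/monicP: mq; rewrite lead_coefE.
set d : rat := \prod_(i < N) (denq q`_i)%:~R.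
have dint : d \is a Num.int by rewrite /d; apply: rpred_prod => i _; apply: intr_int.
have d0 : d != 0 by rewrite /d; apply/prodf_neq0 => i _; rewrite intr_eq0 denq_neq0.
have dc i : (i < N)%N -> d * q`_i \is a Num.int.
  move=> iN; rewrite /d (bigD1 (Ordinal iN)) //= mulrAC.
  apply: rpredM; last by apply: rpred_prod => j _; apply: intr_int.
  have := divq_num_den q`_i => E.
  by rewrite -{2}E mulrC divfK ?intr_int // intr_eq0 denq_neq0.
set E := fun i => d ^+ (m - i) * q`_i.
have Eint i : (i < N)%N -> E i \is a Num.int.
  move=> iN; rewrite /E; have [im|] := ltnP i m.
    rewrite -(subnSK im) exprS mulrAC; apply: rpredM; last by apply: rpredX.
    by apply: dc.
  move=> mi; have im' : (i <= m)%N by rewrite /m -ltnS prednK.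
  have -> : i = m by apply/eqP; rewrite eqn_leq mi im'.
  by rewrite subnn expr0 mul1r cm.
exists d; split => //.
exists (\poly_(i < N) Num.floor (E i)).
have Em : E m = 1 by rewrite /E subnn expr0 mul1r cm.
have szp : size (\poly_(i < N) Num.floor (E i)) = N.
  by apply: size_poly_eq; rewrite -/m Em floor1.
split.
  by rewrite monicE lead_coefE szp coef_poly prednK // leqnn Em floor1.
have -> : map_poly (fun z : int => z%:~R : M) (\poly_(i < N) Num.floor (E i))
          = map_poly (in_alg M) (\poly_(i < N) E i).
  apply/polyP => i; rewrite !coef_map /= !coef_poly.
  case: ifP => iN; last by rewrite mulr0z scale0r.
  by rewrite -[in RHS](floorK (Eint _ iN)) scaler_int.
apply/rootP.
rewrite (horner_coef_wide _ (n := N)); last by rewrite size_map_poly; apply: size_poly.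
transitivity ((d ^+ m)%:A * (map_poly (in_alg M) q).[a]); last by rewrite (rootP rq) mulr0.
rewrite (horner_coef_wide _ (n := N)) ?size_map_poly // mulr_sumr.
apply: eq_bigr => [[i iN]] _ /=.
rewrite !coef_map /= coef_poly iN /E exprZn !mulr_algl scalerA scalerA.
congr (_ *: _); rewrite mulrAC -exprD subnK //.
by rewrite -ltnS prednK.
Qed.

Lemma scale_algint (M : fieldExtType rat) (a : M) :
  exists d : rat, d != 0 /\ is_algint (d *: a).
Proof.
have /polyOver1P [q Eq] := minPolyOver 1%AS a.
apply: (@clear_den M q).
  by rewrite -(map_monic (in_alg M)) -Eq monic_minPoly.
by rewrite -Eq root_minPoly.
Qed.

Section Main.
Variables (M : splittingFieldType rat) (K L : {subfield M}) (n : nat)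
          (g : 'I_n -> gal_of L).
Hypothesis g_inj : injective g.
Hypothesis g_in : forall k, g k \in 'Gal(L / K)%g.

Local Notation TV := (TV M n).
Local Notation PV := (PV M n).
Local Notation SS := (inSS g).
Local Notation sg k := ((g k : 'AEnd(M)) : M -> M).

Lemma tvC (x y : TV) : x * y = y * x.
Proof. by apply/ffunP => k; rewrite !ffunE mulrC. Qed.
Lemma tvCA (x y z : TV) : x * (y * z) = y * (x * z).
Proof. by rewrite mulrA (tvC x y) -mulrA. Qed.

Lemma inIgE l k : (g k \in Ig g l) = (l <= k)%N.
Proof.
apply/imsetP/idP => [[k' ]|lk]; last by exists k; rewrite ?inE.
by rewrite inE => lk' /g_inj ->.
Qed.

Lemma notGcE I k : (g k \notin Gc K I) = (g k \in I).
Proof. by rewrite /Gc in_setD g_in andbT negbK. Qed.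

Definition van l (x : TV) := forall k : 'I_n, (l <= k)%N -> x k = 0.

Lemma SSIP l x : inSS_I g (Gc K (Ig g l)) x <-> SS x /\ van l x.
Proof.
split=> [][h1 h2]; split=> // k.
  by move=> lk; apply: h2; rewrite notGcE inIgE.
by rewrite notGcE inIgE => /h2.
Qed.

Lemma SSRP i j x : inSS_I g (Ig g i :|: Gc K (Ig g j)) x <->
  SS x /\ forall k : 'I_n, (j <= k)%N -> (k < i)%N -> x k = 0.
Proof.
split=> [][h1 h2]; split=> // k.
  move=> jk ki; apply: h2; rewrite in_setU negb_or notGcE !inIgE jk andbT.
  by rewrite -ltnNge.
by rewrite in_setU negb_or notGcE !inIgE -ltnNge => /andP[ki jk]; apply: h2.
Qed.

Lemma roi_opp a : in_ringOfIntegers L a -> in_ringOfIntegers L (- a).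
Proof. by case=> h1 h2; split; [rewrite rpredN | apply: algint_opp]. Qed.
Lemma roi_mul a b : in_ringOfIntegers L a -> in_ringOfIntegers L b ->
  in_ringOfIntegers L (a * b).
Proof. by case=> h1 h2 [h3 h4]; split; [rewrite rpredM | apply: algint_mul]. Qed.
Lemma roi1 : in_ringOfIntegers L 1.
Proof. by split; [rewrite mem1v | apply: algint1]. Qed.
Lemma roi_gal k a : in_ringOfIntegers L a -> in_ringOfIntegers L (sg k a).
Proof.
case=> h1 h2; split; first by rewrite memv_gal.
by apply: algint_rmorph.
Qed.

Lemma SS0 : SS 0.
Proof. by exists [::]; rewrite big_nil. Qed.
Lemma SStens a b : in_ringOfIntegers L a -> in_ringOfIntegers L b -> SS (tens g a b).
Proof.
move=> ha hb; exists [:: (a, b)]; rewrite big_seq1; split => //.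
by move=> p; rewrite inE => /eqP ->.
Qed.
Lemma tens11 : tens g 1 1 = 1.
Proof. by apply/ffunP => k; rewrite !ffunE rmorph1 mulr1. Qed.
Lemma SS1 : SS 1.
Proof. by rewrite -tens11; apply: SStens; apply: roi1. Qed.
Lemma SSD x y : SS x -> SS y -> SS (x + y).
Proof.
case=> s [hs ->] [t [ht ->]]; exists (s ++ t); rewrite big_cat; split => //.
by move=> p; rewrite mem_cat => /orP[/hs|/ht].
Qed.
Lemma tensN a b : tens g (- a) b = - tens g a b.
Proof. by apply/ffunP => k; rewrite !ffunE rmorphN mulNr. Qed.
Lemma SSN x : SS x -> SS (- x).
Proof.
case=> s [hs ->]; exists [seq (- p.1, p.2) | p <- s]; split.
  move=> p /mapP[q /hs [h1 h2] ->] /=; split => //; exact: roi_opp.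
by rewrite big_map -sumrN; apply: eq_bigr => p _; rewrite tensN.
Qed.
Lemma SSB x y : SS x -> SS y -> SS (x - y).
Proof. by move=> hx hy; apply: SSD => //; apply: SSN. Qed.
Lemma SS_sum (I : Type) (r : seq I) (P : pred I) (F : I -> TV) :
  (forall i, P i -> SS (F i)) -> SS (\sum_(i <- r | P i) F i).
Proof. by move=> h; apply: big_ind => //; [apply: SS0 | apply: SSD]. Qed.
Lemma tensM a b c d : tens g a b * tens g c d = tens g (a * c) (b * d).
Proof. by apply/ffunP => k; rewrite !ffunE rmorphM mulrACA. Qed.
Lemma SSM x y : SS x -> SS y -> SS (x * y).
Proof.
case=> s [hs ->] [t [ht ->]]; rewrite mulr_suml big_seq; apply: SS_sum => p ps.
rewrite mulr_sumr big_seq; apply: SS_sum => q qt; rewrite tensM.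
have [h1 h2] := hs p ps; have [h3 h4] := ht q qt.
by apply: SStens; apply: roi_mul.
Qed.

Lemma van0 l : van l 0.
Proof. by move=> k _; rewrite ffunE. Qed.
Lemma vanD l x y : van l x -> van l y -> van l (x + y).
Proof. by move=> hx hy k lk; rewrite ffunE hx ?hy ?addr0. Qed.
Lemma vanN l x : van l x -> van l (- x).
Proof. by move=> hx k lk; rewrite ffunE hx ?oppr0. Qed.
Lemma vanB l x y : van l x -> van l y -> van l (x - y).
Proof. by move=> hx hy; apply: vanD => //; apply: vanN. Qed.
Lemma vanMl l x y : van l x -> van l (x * y).
Proof. by move=> hx k lk; rewrite ffunE hx ?mul0r. Qed.
Lemma vanMr l x y : van l y -> van l (x * y).
Proof. by move=> hy k lk; rewrite ffunE hy ?mulr0. Qed.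
Lemma van_sum l (I : Type) (r : seq I) (P : pred I) (F : I -> TV) :
  (forall i, P i -> van l (F i)) -> van l (\sum_(i <- r | P i) F i).
Proof. by move=> h; apply: big_ind => //; [apply: van0 | apply: vanD]. Qed.

Definition Pe (p q : PV) := forall l, SS (p l - q l) /\ van l (p l - q l).
Lemma PeqE p q : Peq K g p q <-> Pe p q.
Proof. by split=> h l; apply/SSIP; apply: h. Qed.
Lemma Pe_refl p : Pe p p.
Proof. by move=> l; rewrite subrr; split; [apply: SS0 | apply: van0]. Qed.
Lemma Pe_sym p q : Pe p q -> Pe q p.
Proof.
move=> h l; have [h1 h2] := h l; rewrite -opprB.
by split; [apply: SSN | apply: vanN].
Qed.
Arguments Pe_sym [p q].
Lemma Pe_trans p q r : Pe p q -> Pe q r -> Pe p r.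
Proof.
move=> h h' l; have [h1 h2] := h l; have [h3 h4] := h' l.
have -> : p l - r l = (p l - q l) + (q l - r l) by rewrite addrA subrK.
by split; [apply: SSD | apply: vanD].
Qed.
Arguments Pe_trans [p q r].
Lemma Pe_add p q p' q' : Pe p q -> Pe p' q' -> Pe (p + p') (q + q').
Proof.
move=> h h' l; have [h1 h2] := h l; have [h3 h4] := h' l.
have -> : (p + p') l - (q + q') l = (p l - q l) + (p' l - q' l).
  by rewrite !ffunE addrACA opprD.
by split; [apply: SSD | apply: vanD].
Qed.
Arguments Pe_add [p q p' q'].

Definition Pr (p : PV) := forall l, SS (p l).
Lemma Pr0 : Pr 0. Proof. by move=> l; rewrite ffunE; apply: SS0. Qed.
Lemma PrD p q : Pr p -> Pr q -> Pr (p + q).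
Proof. by move=> hp hq l; rewrite ffunE; apply: SSD. Qed.
Lemma Pr_sum (I : Type) (r : seq I) (P : pred I) (F : I -> PV) :
  (forall i, P i -> Pr (F i)) -> Pr (\sum_(i <- r | P i) F i).
Proof. by move=> h; apply: big_ind => //; [apply: Pr0 | apply: PrD]. Qed.
Lemma Pr_smul x p : SS x -> Pr p -> Pr (smul x p).
Proof. by move=> hx hp l; rewrite ffunE; apply: SSM. Qed.

Lemma sep_pair j k : j != k -> exists c, in_ringOfIntegers L c /\ sg j c != sg k c.
Proof.
move=> jk.
have : ~ {in L, g j =1 g k}.
  by move=> /gal_eqP /eqP /g_inj /eqP; rewrite (negbTE jk).
move=> nE.
have [a [aL ja]] : exists a, a \in L /\ sg j a != sg k a.
  apply: NNPP => H; apply: nE => a aL; apply/eqP; apply: NNPP => ne.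
  by apply: H; exists a; split => //; apply/negP.
have [d [d0 ad]] := @scale_algint _ a.
exists (d *: a); split; first by split => //; rewrite memvZ.
by rewrite !linearZ /=; apply: contra ja => /eqP /(scalerI d0) ->.
Qed.

Lemma sep k : exists z, SS z /\ z k != 0 /\ forall k', k' != k -> z k' = 0.
Proof.
suff H : forall s : seq 'I_n, k \notin s ->
    exists z, SS z /\ z k != 0 /\ forall j, j \in s -> z j = 0.
  have [|z [h1 [h2 h3]]] := H [seq j <- enum 'I_n | j != k].
    by rewrite mem_filter eqxx.
  exists z; split => //; split => // k' k'k; apply: h3.
  by rewrite mem_filter k'k mem_enum.
elim=> [_|j s IH].
  exists 1; split; first exact: SS1.
  by split => //; rewrite ffunE oner_neq0.
rewrite inE negb_or => /andP[kj ks].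
have [z [h1 [h2 h3]]] := IH ks.
have jk' : j != k by rewrite eq_sym.
have [c [hc hjk]] := sep_pair _ _ jk'.
exists (z * (tens g c 1 - tens g 1 (sg j c))).
have ev k' : (tens g c 1 - tens g 1 (sg j c)) k' = sg k' c - sg j c.
  by rewrite !ffunE rmorph1 mulr1 mul1r.
split.
  apply: SSM => //; apply: SSB; apply: SStens => //; try exact: roi1.
  exact: roi_gal.
split.
  by rewrite ffunE ev mulf_neq0 // subr_eq0 eq_sym.
move=> j'; rewrite inE => /orP[/eqP ->|js].
  by rewrite ffunE ev subrr mulr0.
by rewrite ffunE h3 // mul0r.
Qed.


Definition e (i : 'I_n) : PV := [ffun l => if l == i then 1 else 0].
Definition lin (A : 'M[TV]_n) (p : PV) : PV := [ffun j => \sum_i p i * A i j].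
Definition Phi (f : PV -> PV) : 'M[TV]_n := \matrix_(i, j) f (e i) j.

Lemma Pe_eq p q : p = q -> Pe p q.
Proof. by move=> ->; apply: Pe_refl. Qed.
Lemma Pe_sum (I : Type) (r : seq I) (F G : I -> PV) :
  (forall i, Pe (F i) (G i)) -> Pe (\sum_(i <- r) F i) (\sum_(i <- r) G i).
Proof.
move=> h; apply: (big_ind2 Pe) => //; first exact: Pe_refl.
by move=> *; apply: Pe_add.
Qed.
Arguments Pe_sum [I] r [F] G.

Lemma SS_e i l : SS (e i l).
Proof. by rewrite ffunE; case: ifP => _; [apply: SS1 | apply: SS0]. Qed.
Lemma Pr_e i : Pr (e i).
Proof. by move=> l; apply: SS_e. Qed.

Lemma decomp (p : PV) : p = \sum_i smul (p i) (e i).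
Proof.
apply/ffunP => l; rewrite sum_ffunE (bigD1 l) //= !ffunE eqxx mulr1 big1 ?addr0 //.
by move=> i il; rewrite !ffunE eq_sym (negbTE il) mulr0.
Qed.

Section End.
Variable f : PV -> PV.
Hypothesis hf : isEnd K g f.

Lemma fPr p : Pr p -> Pr (f p).
Proof. by case: hf => h1 _ _ _; apply: h1. Qed.
Lemma fPe p q : Pr p -> Pr q -> Pe p q -> Pe (f p) (f q).
Proof. by case: hf => _ h2 _ _ hp hq /PeqE h; apply/PeqE; apply: h2. Qed.
Arguments fPe [p q].
Lemma fD p q : Pr p -> Pr q -> Pe (f (p + q)) (f p + f q).
Proof. by case: hf => _ _ h3 _ hp hq; apply/PeqE; apply: h3. Qed.
Arguments fD [p q].
Lemma fZ x p : SS x -> Pr p -> Pe (f (smul x p)) (smul x (f p)).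
Proof. by case: hf => _ _ _ h4 hx hp; apply/PeqE; apply: h4. Qed.
Arguments fZ [x p].

Lemma f0 : Pe (f 0) 0.
Proof.
have := fD Pr0 Pr0; rewrite addr0 => h l.
have [h1 h2] := h l.
have E : f 0 l - (f 0 + f 0) l = - (f 0 l - (0 : PV) l).
  by rewrite !ffunE subr0 opprD addrA subrr sub0r.
rewrite E in h1 h2.
by split; [rewrite -[_ - _]opprK; apply: SSN | rewrite -[_ - _]opprK; apply: vanN].
Qed.

Lemma f_sum (I : Type) (r : seq I) (F : I -> PV) :
  (forall i, Pr (F i)) -> Pe (f (\sum_(i <- r) F i)) (\sum_(i <- r) f (F i)).
Proof.
move=> hF; elim: r => [|a r IH]; first by rewrite !big_nil; apply: f0.
rewrite !big_cons; apply: Pe_trans (fD (hF a) _) _.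
  by apply: Pr_sum.
by apply: Pe_add => //; apply: Pe_refl.
Qed.
Arguments f_sum [I] r [F].

Lemma f_lin p : Pr p -> Pe (f p) (lin (Phi f) p).
Proof.
move=> hp; rewrite {1}(decomp p).
apply: Pe_trans (f_sum _ _) _ => [i|]; first by apply: Pr_smul => //; apply: Pr_e.
apply: Pe_trans (Pe_sum _ (fun i => smul (p i) (f (e i))) _) _.
  by move=> i; apply: fZ => //; apply: Pr_e.
apply: Pe_eq; apply/ffunP => j; rewrite sum_ffunE !ffunE.
by apply: eq_bigr => i _; rewrite !ffunE mxE.
Qed.

Lemma Phi_R : inRmat K g (Phi f).
Proof.
move=> i j; apply/SSRP; split.
  by rewrite mxE; apply: fPr; apply: Pr_e.
move=> k jk ki.
have [z [hz [zk z0]]] := sep k.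
have hze : Pe (smul z (e i)) 0.
  move=> l; rewrite !ffunE subr0; split; first by apply: SSM => //; case: ifP => _; [apply: SS1|apply: SS0].
  case: ifP => [/eqP ->|_]; last by rewrite mulr0; apply: van0.
  rewrite mulr1 => k' ik'; apply: z0; apply: contraTneq ik' => ->.
  by rewrite -ltnNge.
have hPz : Pr (smul z (e i)) by apply: Pr_smul => //; apply: Pr_e.
have H : Pe (smul z (f (e i))) 0.
  apply: Pe_trans (Pe_sym (fZ hz (Pr_e i))) _.
  apply: Pe_trans (fPe hPz Pr0 hze) _.
  exact: f0.
have [_ /(_ k jk)] := H j.
rewrite !ffunE mxE subr0 => /eqP; rewrite mulf_eq0 (negbTE zk) /= => /eqP.
done.
Qed.

End End.

Lemma lin_isE A : inRmat K g A -> isEnd K g (lin A).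
Proof.
move=> hA.
have hA' i j := proj1 (SSRP i j (A i j)) (hA i j).
split.
- move=> p hp l; rewrite ffunE; apply: SS_sum => i _; apply: SSM => //.
  by case: (hA' i l).
- move=> p q hp hq /PeqE h; apply/PeqE => j.
  have -> : lin A p j - lin A q j = \sum_i (p i - q i) * A i j.
    by rewrite !ffunE -sumrB; apply: eq_bigr => i _; rewrite mulrBl.
  split.
    by apply: SS_sum => i _; apply: SSM; [case: (h i) | case: (hA' i j)].
  move=> k jk; rewrite sum_ffunE big1 // => i _; rewrite ffunE.
  have [ik|ki] := leqP i k.
    by have [_ ->] := h i; rewrite ?mul0r.
  by have [_ ->] := hA' i j; rewrite ?mulr0.
- move=> p q hp hq; apply/PeqE; apply: Pe_eq; apply/ffunP => j.
  by rewrite !ffunE -big_split; apply: eq_bigr => i _; rewrite !ffunE mulrDl.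
- move=> x p hx hp; apply/PeqE; apply: Pe_eq; apply/ffunP => j.
  rewrite !ffunE mulr_sumr; apply: eq_bigr => i _; rewrite !ffunE mulrA.
  by congr (_ * _); apply: tvC.
Qed.

Lemma Phi_lin A : Phi (lin A) = A.
Proof.
apply/matrixP => i j; rewrite mxE ffunE (bigD1 i) //= !ffunE eqxx mul1r big1 ?addr0 //.
by move=> i' i'i; rewrite !ffunE (negbTE i'i) mul0r.
Qed.


Definition Emx (a b : 'I_n) : 'M[TV]_n :=
  \matrix_(i, j) (if (i == a) && (j == b) then 1 else 0).

Lemma Emx_R (a b : 'I_n) : (a <= b)%N -> inRmat K g (Emx a b).
Proof.
move=> ab i j; apply/SSRP; rewrite mxE; split.
  by case: ifP => _; [apply: SS1 | apply: SS0].
move=> k jk ki; case: ifP => [/andP[/eqP ia /eqP jb]|_]; last by rewrite ffunE.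
by move: ki; rewrite ia ltnNge (leq_trans ab) // -jb.
Qed.

Lemma lin_Emx_e a b : lin (Emx a b) (e a) = e b.
Proof.
apply/ffunP => c; rewrite !ffunE (bigD1 a) //= !ffunE mxE !eqxx mul1r /=.
rewrite big1 ?addr0 // => i ia; by rewrite !ffunE (negbTE ia) mul0r.
Qed.

Lemma lin_Emx_at a b q : lin (Emx a b) q b = q a.
Proof.
rewrite !ffunE (bigD1 a) //= mxE !eqxx mulr1 big1 ?addr0 // => i ia.
by rewrite mxE (negbTE ia) mulr0.
Qed.

Lemma lin_Emx_e_other a b i : i != a -> lin (Emx a b) (e i) = 0.
Proof.
move=> ia; apply/ffunP => c; rewrite !ffunE big1 // => i' _.
rewrite !ffunE mxE; case: eqP => [->|_]; last by rewrite mul0r.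
by rewrite (negbTE ia) mulr0.
Qed.

Lemma center f (hf : isEnd K g f)
  (hc : forall f', isEnd K g f' -> EndEq K g (f \o f') (f' \o f))
  (j0 : 'I_n) (hj0 : forall j : 'I_n, (j0 <= j)%N) :
  exists x, SS x /\ EndEq K g f (smul x).
Proof.
set A := Phi f.
have hA i j := proj1 (SSRP i j (A i j)) (Phi_R f hf i j).
have off (i m : 'I_n) : i != m -> van m (A i m).
  move=> im.
  have := hc _ (lin_isE _ (Emx_R _ _ (leqnn m))) (e i) (Pr_e i).
  move/PeqE => /= /(_ m) [_].
  rewrite lin_Emx_e_other // lin_Emx_at => h1.
  have [_ h2] := f0 f hf m; rewrite ffunE subr0 in h2.
  have -> : A i m = f 0 m - (f 0 m - f (e i) m) by rewrite mxE opprB addrC subrK.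
  by apply: vanB.
have diag (j : 'I_n) : van j (A j j - A j0 j0).
  have := hc _ (lin_isE _ (Emx_R _ _ (hj0 j))) (e j0) (Pr_e j0).
  move/PeqE => /= /(_ j) [_].
  by rewrite lin_Emx_e lin_Emx_at !mxE.
exists (A j0 j0); split; first by case: (hA j0 j0).
move=> p hp; apply/PeqE; apply: Pe_trans (f_lin f hf p hp) _ => l.
rewrite !ffunE (bigD1 l) //=.
set S := \sum_(i | i != l) _.
have -> : p l * A l l + S - A j0 j0 * p l = p l * (A l l - A j0 j0) + S.
  by rewrite mulrBr (tvC (p l) (A j0 j0)) addrAC.
split.
  apply: SSD; first by apply: SSM => //; apply: SSB; [case: (hA l l)|case: (hA j0 j0)].
  by apply: SS_sum => i _; apply: SSM => //; case: (hA i l).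
apply: vanD; first by apply: vanMr.
by apply: van_sum => i il; apply: vanMr; apply: off.
Qed.

Lemma smul_isE x : SS x -> isEnd K g (smul x).
Proof.
move=> hx; split.
- by move=> p hp; apply: Pr_smul.
- move=> p q hp hq /PeqE h; apply/PeqE => l; have [h1 h2] := h l.
  rewrite !ffunE -mulrBr; split; [exact: SSM | exact: vanMr].
- by move=> p q _ _; apply/PeqE; apply: Pe_eq; apply/ffunP => l; rewrite !ffunE mulrDr.
- by move=> y p _ _; apply/PeqE; apply: Pe_eq; apply/ffunP => l; rewrite !ffunE tvCA.
Qed.

Definition Ipred (A : 'M[TV]_n) := forall i j, SS (A i j) /\ van j (A i j).
Lemma IE A : inImat K g A <-> Ipred A.
Proof. by split=> h i j; apply/SSIP; apply: h. Qed.
Definition Rpred (A : 'M[TV]_n) := forall i j, SS (A i j) /\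
  forall k : 'I_n, (j <= k)%N -> (k < i)%N -> A i j k = 0.
Lemma RE A : inRmat K g A <-> Rpred A.
Proof. by split=> h i j; apply/SSRP; apply: h. Qed.

Lemma I_eq A B : A = B -> Ipred (A - B).
Proof.
move=> ->; rewrite subrr => i j; rewrite mxE; split; [exact: SS0 | exact: van0].
Qed.

Lemma main_sec :
  let R := inRmat K g in
  let I := inImat K g in
  let isE := isEnd K g in
  let Eq := EndEq K g in
  [/\ R 1%:M,
      forall A B, R A -> R B -> R (A - B),
      forall A B, R A -> R B -> R (A *m B)
    & forall A i j, R A -> inSS g (A i j)] /\
  [/\ forall A, I A -> R A,
      I 0,
      forall A B, I A -> I B -> I (A - B)
    & forall A B, R A -> I B -> I (A *m B) /\ I (B *m A)] /\
  (exists Phi : (PV -> PV) -> 'M[TV]_n,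
    (forall f, isE f -> R (Phi f)) /\
    (forall f f', isE f -> isE f' -> (Eq f f' <-> I (Phi f - Phi f'))) /\
    (forall A, R A -> exists f, isE f /\ I (Phi f - A)) /\
    (forall f f', isE f -> isE f' -> I (Phi (fun p => f p + f' p) - (Phi f + Phi f'))) /\
    (forall f f', isE f -> isE f' -> I (Phi (f' \o f) - Phi f *m Phi f')) /\
    I (Phi id - 1%:M) /\
    (forall x f, inSS g x -> isE f -> I (Phi (fun p => smul x (f p)) - x%:M *m Phi f))) /\
  [/\ forall x, inSS g x ->
        isE (smul x) /\ forall f, isE f -> Eq (f \o smul x) (smul x \o f),
      forall x y, inSS g x -> inSS g y ->
        [/\ Eq (smul (x * y)) (smul x \o smul y),
            Eq (smul (x + y)) (fun p => smul x p + smul y p) & Eq (smul 1) id],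
      forall x y, inSS g x -> inSS g y -> Eq (smul x) (smul y) -> x = y
    & forall f, isE f -> (forall f', isE f' -> Eq (f \o f') (f' \o f)) ->
        exists x, inSS g x /\ Eq f (smul x)].
Proof.
move=> R I isE Eq.
have Rc A : R A <-> Rpred A by apply: RE.
have Ic A : I A <-> Ipred A by apply: IE.
have I0 : I 0 by apply/Ic => i j; rewrite mxE; split; [apply: SS0 | apply: van0].
split; [|split; [|split]].
-
  split.
  + apply/Rc => i j; rewrite mxE; split; first by case: (i == j); [apply: SS1|apply: SS0].
    move=> k jk ki; case: eqP => [ij|_]; last by rewrite mulr0n ffunE.
    by move: ki; rewrite ij ltnNge jk.
  + move=> A B /Rc hA /Rc hB; apply/Rc => i j; rewrite !mxE.
    have [h1 h2] := hA i j; have [h3 h4] := hB i j.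
    split; first by apply: SSB.
    by move=> k jk ki; rewrite !ffunE h2 ?h4 ?subrr.
  + move=> A B /Rc hA /Rc hB; apply/Rc => i j; rewrite mxE; split.
      by apply: SS_sum => k _; apply: SSM; [case: (hA i k)|case: (hB k j)].
    move=> c jc ci; rewrite sum_ffunE big1 // => k _; rewrite ffunE.
    have [kc|ck] := leqP k c.
      by have [_ ->] := hA i k; rewrite ?mul0r.
    by have [_ ->] := hB k j; rewrite ?mulr0.
  + by move=> A i j /Rc hA; case: (hA i j).
-
  split => //.
  + move=> A /Ic hA; apply/Rc => i j; have [h1 h2] := hA i j; split => //.
    by move=> k jk _; apply: h2.
  + move=> A B /Ic hA /Ic hB; apply/Ic => i j; rewrite !mxE.
    have [h1 h2] := hA i j; have [h3 h4] := hB i j.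
    by split; [apply: SSB | apply: vanB].
  + move=> A B /Rc hA /Ic hB; split; apply/Ic => i j; rewrite mxE; split.
    * by apply: SS_sum => k _; apply: SSM; [case: (hA i k)|case: (hB k j)].
    * by apply: van_sum => k _; apply: vanMr; case: (hB k j).
    * by apply: SS_sum => k _; apply: SSM; [case: (hB i k)|case: (hA k j)].
    * apply: van_sum => k _ c jc; rewrite ffunE.
      have [kc|ck] := leqP k c.
        by have [_ ->] := hB i k; rewrite ?mul0r.
      by have [_ ->] := hA k j; rewrite ?mulr0.
-
  exists Phi; split; [|split; [|split; [|split; [|split; [|split]]]]].
  + by move=> f hf; apply: Phi_R.
  + move=> f f' hf hf'; split.
      move=> hE; apply/Ic => i j; have /PeqE := hE (e i) (Pr_e i).
      by move=> /(_ j); rewrite !mxE.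
    move=> /Ic hI p hp; apply/PeqE.
    apply: Pe_trans (f_lin f hf p hp) _; apply: Pe_trans _ (Pe_sym (f_lin f' hf' p hp)).
    move=> l; have -> : lin (Phi f) p l - lin (Phi f') p l = \sum_i p i * (Phi f - Phi f') i l.
      by rewrite !ffunE -sumrB; apply: eq_bigr => i _; rewrite !mxE mulrBr.
    split; first by apply: SS_sum => i _; apply: SSM => //; case: (hI i l).
    by apply: van_sum => i _; apply: vanMr; case: (hI i l).
  + move=> A hA; exists (lin A); split; first exact: lin_isE.
    by rewrite Phi_lin subrr.
  + move=> f f' _ _; apply/Ic; apply: I_eq; apply/matrixP => i j.
    by rewrite !mxE ffunE.
  + move=> f f' hf hf'; apply/Ic => i j.
    have := f_lin f' hf' (f (e i)) (fPr f hf _ (Pr_e i)) j.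
    rewrite !mxE ffunE.
    have -> : \sum_k Phi f i k * Phi f' k j = \sum_k f (e i) k * Phi f' k j.
      by apply: eq_bigr => k _; rewrite mxE.
    done.
  + apply/Ic; apply: I_eq; apply/matrixP => i j; rewrite !mxE ffunE.
    by rewrite eq_sym; case: (i == j).
  + move=> x f hx hf; apply/Ic; apply: I_eq; rewrite mul_scalar_mx.
    by apply/matrixP => i j; rewrite !mxE ffunE.
-
  split.
  + move=> x hx; split; first exact: smul_isE.
    by move=> f hf p hp; apply/PeqE; apply: (fZ f hf).
  + move=> x y hx hy; split.
    * by move=> p _; apply/PeqE; apply: Pe_eq; apply/ffunP => l; rewrite !ffunE mulrA.
    * by move=> p _; apply/PeqE; apply: Pe_eq; apply/ffunP => l; rewrite !ffunE mulrDl.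
    * by move=> p _; apply/PeqE; apply: Pe_eq; apply/ffunP => l; rewrite !ffunE mul1r.
  + move=> x y hx hy hE; apply/ffunP => k.
    have hp : Pr [ffun => 1] by move=> l; rewrite ffunE; apply: SS1.
    have /PeqE /(_ k) [_ /(_ k (leqnn k))] := hE _ hp.
    by rewrite !ffunE !mulr1 => /eqP; rewrite subr_eq0 => /eqP.
  + move=> f hf hc; have [n0|n0] := posnP n.
      exists 0; split; first exact: SS0.
      by move=> p _ l; suff : (l < 0)%N by []; rewrite -[X in (_ < X)%N]n0 ltn_ord.
    exact: (center f hf hc (Ordinal n0)).
Qed.

End Main.

Theorem mainTheorem13 (M : splittingFieldType rat) (K L : {subfield M})
  (HKL : galois K L) (n : nat) (g : 'I_n -> gal_of L)
  (g_inj : injective g) (g_in : forall k, g k \in 'Gal(L / K)%g)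
  (g_onto : forall s, s \in 'Gal(L / K)%g -> exists k, g k = s) :
  let R := inRmat K g in
  let I := inImat K g in
  let isE := isEnd K g in
  let Eq := EndEq K g in
  (* calR is a subring of M_n(S (x)_R S) *)
  [/\ R 1%:M,
      forall A B, R A -> R B -> R (A - B),
      forall A B, R A -> R B -> R (A *m B)
    & forall A i j, R A -> inSS g (A i j)] /\
  (* calI is a two-sided ideal of calR *)
  [/\ forall A, I A -> R A,
      I 0,
      forall A B, I A -> I B -> I (A - B)
    & forall A B, R A -> I B -> I (A *m B) /\ I (B *m A)] /\
  (* End(P)^op is isomorphic to calR/calI as S(x)S-algebras *)
  (exists Phi : (PV M n -> PV M n) -> 'M[TV M n]_n,
    (forall f, isE f -> R (Phi f)) /\
    (forall f f', isE f -> isE f' -> (Eq f f' <-> I (Phi f - Phi f'))) /\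
    (forall A, R A -> exists f, isE f /\ I (Phi f - A)) /\
    (forall f f', isE f -> isE f' -> I (Phi (fun p => f p + f' p) - (Phi f + Phi f'))) /\
    (forall f f', isE f -> isE f' -> I (Phi (f' \o f) - Phi f *m Phi f')) /\
    I (Phi id - 1%:M) /\
    (forall x f, inSS g x -> isE f -> I (Phi (fun p => smul x (f p)) - x%:M *m Phi f))) /\
  (* the natural map S(x)S -> Cen(End(P)) is a ring isomorphism *)
  [/\ forall x, inSS g x ->
        isE (smul x) /\ forall f, isE f -> Eq (f \o smul x) (smul x \o f),
      forall x y, inSS g x -> inSS g y ->
        [/\ Eq (smul (x * y)) (smul x \o smul y),
            Eq (smul (x + y)) (fun p => smul x p + smul y p) & Eq (smul 1) id],
      forall x y, inSS g x -> inSS g y -> Eq (smul x) (smul y) -> x = y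
    & forall f, isE f -> (forall f', isE f' -> Eq (f \o f') (f' \o f)) ->
        exists x, inSS g x /\ Eq f (smul x)].
Proof. exact: (@main_sec M K L n g g_inj g_in). Qed.
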